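(* Let $G$ be a connected graph with $\mathrm{col}(G)\geq 3$. Then for every integer $m\geq \mathrm{col}(G)+3$, $$P_{DP}(K_1\vee G,m)\geq \min\left\{P(K_1\vee G,m),\; m\,P_{DP}(G,m-1)+2\,(m-\mathrm{col}(G)-2)^{|V(G)|-2}\right\}.$$
   Context: All graphs are finite and simple. $K_1\vee G$ is the join of a single vertex with $G$. The coloring number $\mathrm{col}(G)$ is the smallest integer $d$ such that there is an ordering $v_1,\dots,v_n$ of $V(G)$ in which each $v_i$ has at most $d-1$ neighbors among $v_1,\dots,v_{i-1}$. $P(G,m)$ denotes the chromatic polynomial of $G$. A cover of a graph $G$ is a pair $\mathcal{H}=(L,H)$ where $H$ is a graph and $L:V(G)\to\mathcal{P}(V(H))$ satisfies: (1) the sets $L(u)$, $u\in V(G)$, partition $V(H)$; (2) for every $u$, $H[L(u)]$ is complete; (3) if $E_H(L(u),L(v))\neq\emptyset$ then $u=v$ or $uv\in E(G)$; (4) if $uv\in E(G)$ then $E_H(L(u),L(v))$ is a matching (possibly empty). Here $E_H(S,U)$ is the set of edges of $H$ between $S$ and $U$. The cover is $m$-fold if $|L(u)|=m$ for all $u$. An $\mathcal{H}$-coloring is an independent set of $H$ of size $|V(G)|$. $P_{DP}(G,\mathcal{H})$ is the number of $\mathcal{H}$-colorings, and $P_{DP}(G,m)$ is the minimum of $P_{DP}(G,\mathcal{H})$ over all $m$-fold covers $\mathcal{H}$ of $G$. *)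

(* Defs.v *)
From mathcomp Require Import all_boot.
Set Implicit Arguments. Unset Strict Implicit. Unset Printing Implicit Defensive.

Definition simple_graph (V : finType) (e : rel V) : Prop :=
  symmetric e /\ irreflexive e.

Definition connected_graph (V : finType) (e : rel V) : Prop :=
  forall x y : V, connect e x y.

(* K_1 \/ G : the new vertex is None, adjacent to every vertex of G. *)
Definition join_K1 (V : finType) (e : rel V) : rel (option V) :=
  fun x y => match x, y with
             | Some a, Some b => e a b
             | None, Some _ | Some _, None => true
             | None, None => false
             end.

Definition col_ordering_ok (V : finType) (e : rel V) (d : nat) : Prop :=
  exists s : seq V, perm_eq s (enum V) /\
    forall x, x \in s -> count (e x) (take (index x s) s) < d.

Definition is_coloring_number (V : finType) (e : rel V) (c : nat) : Prop :=
  col_ordering_ok e c /\ (forall d, col_ordering_ok e d -> c <= d).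

Definition chrom_poly (V : finType) (e : rel V) (m : nat) : nat :=
  #|[set f : {ffun V -> 'I_m} | [forall x, forall y, e x y ==> (f x != f y)]]|.

(* m-fold DP cover: H is a simple graph on V * 'I_m, with L(u) = {u} x 'I_m *)
Definition is_DP_cover (V : finType) (e : rel V) (m : nat)
    (h : rel (V * 'I_m)) : Prop :=
  [/\ symmetric h, irreflexive h,
      (forall u (i j : 'I_m), i != j -> h (u, i) (u, j)),
      (forall u v (i j : 'I_m), u != v -> h (u, i) (v, j) -> e u v) &
      (forall u v (i : 'I_m), e u v -> #|[set j : 'I_m | h (u, i) (v, j)]| <= 1)].

Definition independent (T : finType) (h : rel T) (I : {set T}) : bool :=
  [forall x in I, forall y in I, ~~ h x y].

Definition DP_count (V : finType) (m : nat) (h : rel (V * 'I_m)) : nat :=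
  #|[set I : {set V * 'I_m} | independent h I && (#|I| == #|V|)]|.

Definition is_DP_poly (V : finType) (e : rel V) (m : nat) (p : nat) : Prop :=
  (exists h : rel (V * 'I_m), is_DP_cover e h /\ DP_count h = p) /\
  (forall h : rel (V * 'I_m), is_DP_cover e h -> p <= DP_count h).

(* Main.v *)
Require Import Defs.
From mathcomp Require Import all_boot zify.
Set Implicit Arguments. Unset Strict Implicit. Unset Printing Implicit Defensive.

Definition proper (W : finType) k (h : rel (W * 'I_k)) (f : {ffun W -> 'I_k}) :=
  [forall x, forall y, ~~ h (x, f x) (y, f y)].

Lemma DPcount_fun (W : finType) k (h : rel (W * 'I_k)) :
  (forall u (i j : 'I_k), i != j -> h (u,i) (u,j)) ->
  DP_count h = #|[set f : {ffun W -> 'I_k} | proper h f]|.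
Proof.
move=> h3.
pose F (f : {ffun W -> 'I_k}) : {set W * 'I_k} := [set (x, f x) | x in W].
have Finj : injective F.
  move=> f1 f2 eqF; apply/ffunP=> x.
  have : (x, f1 x) \in F f2 by rewrite -eqF; apply/imsetP; exists x.
  by case/imsetP=> y _ [-> ->].
have cardF f : #|F f| = #|W|.
  by rewrite card_imset // => x y [].
rewrite /DP_count -(card_imset _ Finj); apply: eq_card => I.
rewrite !inE; apply/idP/idP.
- case/andP=> /forallP indI /eqP cI.
  have fstinj : {in I &, injective (@fst W 'I_k)}.
    case=> x i [y j] Hi Hj /= exy; subst y; apply/eqP; rewrite xpair_eqE eqxx /=.
    apply/negP=> nij.
    have /implyP/(_ Hi)/forall_inP/(_ _ Hj) := indI (x,i).
    by rewrite h3 //; apply/negP.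
  have fstT : (@fst W 'I_k) @: I = setT.
    apply/eqP; rewrite eqEcard subsetT cardsT (card_in_imset fstinj) cI.
    by rewrite leqnn.
  have ex x : exists i, (x, i) \in I.
    have : x \in (@fst W 'I_k) @: I by rewrite fstT inE.
    by case/imsetP=> [[y i]] Hyi /= ->; exists i.
  have [f0 Hf0] := fin_all_exists ex.
  pose f := [ffun x => f0 x].
  have sub : F f \subset I.
    by apply/subsetP=> p /imsetP [x _ ->]; rewrite ffunE.
  have eqI : F f = I.
    by have := eqEcard (F f) I; rewrite sub cardF cI leqnn => /eqP.
  apply/imsetP; exists f => //.
  rewrite inE; apply/forallP=> x; apply/forallP=> y.
  have Hx : (x, f x) \in I by rewrite -eqI; apply/imsetP; exists x.
  have Hy : (y, f y) \in I by rewrite -eqI; apply/imsetP; exists y.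
  by have /implyP/(_ Hx)/forall_inP/(_ _ Hy) := indI (x, f x).
- case/imsetP=> f; rewrite inE => /forallP pf ->; rewrite cardF eqxx andbT.
  apply/forallP=> p; apply/implyP=> /imsetP [x _ ->]; apply/forallP=> q;
  apply/implyP=> /imsetP [y _ ->].
  by have /forallP := pf x; apply.
Qed.
Section Greedy.
Variables (W : finType) (k : nat) (e : rel W) (h : rel (W * 'I_k)).
Hypotheses (esym : symmetric e) (hsym : symmetric h) (hirr : irreflexive h)
  (hcross : forall u v a b, u != v -> h (u,a) (v,b) -> e u v)
  (hmatch : forall u v a, e u v -> #|[set b | h (u,a) (v,b)]| <= 1).
Variables (K : seq W) (g0 : {ffun W -> 'I_k}) (A : W -> {set 'I_k}).
Hypothesis g0ok : forall x y, x \in K -> y \in K -> ~~ h (x, g0 x) (y, g0 y).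

Definition good (s : seq W) (g : {ffun W -> 'I_k}) : bool :=
  [&& [forall x, (x \notin s) ==> (g x == g0 x)],
      [forall x, (x \in s) ==> (g x \in A x)] &
      [forall x, forall y, ((x \in s ++ K) && (y \in s ++ K)) ==> ~~ h (x, g x) (y, g y)]].

Lemma bad_card x (g : {ffun W -> 'I_k}) (r : seq W) : x \notin r ->
  #|[set a | [exists y, (y \in r) && h (x,a) (y, g y)]]| <= count (e x) r.
Proof.
elim: r => [|y r IH] /=.
  move=> _; rewrite leqn0 cards_eq0; apply/eqP/setP=> a; rewrite !inE.
  by apply/existsP => -[].
rewrite in_cons negb_or => /andP [xy xr].
have sub : [set a | [exists y0, (y0 \in y :: r) && h (x, a) (y0, g y0)]] \subset
   [set a | h (x,a) (y, g y)] :|: [set a | [exists y0, (y0 \in r) && h (x, a) (y0, g y0)]].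
  apply/subsetP=> a; rewrite !inE => /existsP [z /andP [] ]; rewrite in_cons.
  case/orP=> [/eqP -> -> //| zr hz]; apply/orP; right; apply/existsP; exists z.
  by rewrite zr.
apply: (leq_trans (subset_leq_card sub)); rewrite cardsU.
apply: (leq_trans (leq_subr _ _)); apply: leq_add; last exact: IH xr.
case exy: (e x y) => /=.
  have := @hmatch y x (g y); rewrite esym => /(_ exy).
  congr (_ <= _); apply: eq_card => a; rewrite !inE; exact: hsym.
rewrite leqn0 cards_eq0; apply/eqP/setP=> a; rewrite !inE.
by apply/negP=> /(hcross xy); rewrite exy.
Qed.

Lemma greedy t s : uniq s -> (forall x, x \in s -> x \notin K) ->
  (forall x, x \in s -> count (e x) (take (index x s) s ++ K) + t <= #|A x|) ->
  t ^ size s <= #|[set g | good s g]|.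
Proof.
elim/last_ind: s => [|s x IH].
  move=> _ _ _; rewrite expn0 card_gt0; apply/set0Pn; exists g0; rewrite inE.
  apply/and3P; split; first by apply/forallP=> x; rewrite eqxx implybT.
    by apply/forallP=> x.
  apply/forallP=> x; apply/forallP=> y; apply/implyP=> /andP [hx hy]; exact: g0ok.
rewrite rcons_uniq => /andP [xs us] dK hA.
have idx : index x (rcons s x) = size s.
  by rewrite -cats1 index_cat (negbTE xs) /= eqxx addn0.
have tk : take (size s) (rcons s x) = s by rewrite -cats1 take_size_cat.
have hA' : forall y, y \in s -> count (e y) (take (index y s) s ++ K) + t <= #|A y|.
  move=> y ys; have := hA y; rewrite mem_rcons in_cons ys orbT => /(_ isT).
  rewrite -cats1 index_cat ys takel_cat //; exact: index_size.
have dK' : forall y, y \in s -> y \notin K.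
  by move=> y ys; apply: dK; rewrite mem_rcons in_cons ys orbT.
have IH' := IH us dK' hA'.
have xK : x \notin K by apply: dK; rewrite mem_rcons mem_head.
have hx := hA x; rewrite mem_rcons mem_head idx tk in hx; have {}hx := hx isT.
pose C (g : {ffun W -> 'I_k}) :=
  [set a in A x | [forall y, (y \in s ++ K) ==> ~~ h (x, a) (y, g y)]].
have Cbig g : t <= #|C g|.
  have : A x \subset C g :|: [set a | [exists y, (y \in s ++ K) && h (x,a) (y, g y)]].
    apply/subsetP=> a ha; rewrite !inE ha /=.
    case: (boolP [forall y, _]) => //= /forallPn [y]; rewrite negb_imply negbK => hy.
    by apply/existsP; exists y.
  move/subset_leq_card; rewrite cardsU => /leq_trans /(_ (leq_subr _ _)).
  set cC := #|C g|.
  have H2 := bad_card g (x:=x) (r := s ++ K); rewrite mem_cat negb_or xs xK in H2.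
  move: (H2 isT) hx; set B := #|[set a | [exists y, _]]|; set cA := #|A x|; set cnt := count _ _.
  lia.
pose P := [set p : {ffun W -> 'I_k} * 'I_k | good s p.1 && (p.2 \in C p.1)].
have cardP : t ^ (size (rcons s x)) <= #|P|.
  rewrite -sum1_card.
  rewrite (eq_bigl (fun p : {ffun W -> 'I_k} * 'I_k => good s p.1 && (p.2 \in C p.1)));
    last by move=> p; rewrite inE.
  rewrite -(pair_big_dep (fun g => good s g) (fun g a => a \in C g) (fun _ _ => 1)) /=.
  rewrite size_rcons expnS mulnC.
  apply: (@leq_trans (\sum_(g | good s g) t)).
    rewrite sum_nat_const; apply: leq_mul => //.
    by move: IH'; congr (_ <= _); apply: eq_card => g; rewrite inE.
  by apply: leq_sum => g _; rewrite sum1_card; exact: Cbig.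
pose upd (p : {ffun W -> 'I_k} * 'I_k) := [ffun z => if z == x then p.2 else p.1 z].
have updinj : {in P &, injective upd}.
  case=> [g a] [g' a']; rewrite !inE /= => /andP [/and3P [/forallP g1 _ _] _]
     /andP [/and3P [/forallP g1' _ _] _] equ.
  have ea : a = a' by have := congr1 (fun f : {ffun W -> 'I_k} => f x) equ; rewrite !ffunE eqxx.
  subst a'; congr (_, _); apply/ffunP=> z.
  have := congr1 (fun f : {ffun W -> 'I_k} => f z) equ; rewrite !ffunE.
  case: eqP => [-> _|//].
  by have := g1 x; have := g1' x; rewrite xs /= => /eqP -> /eqP ->.
apply: (leq_trans cardP); rewrite -(card_in_imset updinj).
apply: subset_leq_card; apply/subsetP=> f /imsetP [[g a]] Hp ->; move: Hp.
rewrite !inE /= => /andP [/and3P [/forallP g1 /forallP g2 /forallP g3]] /andP [ha /forallP hC].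
apply/and3P; split.
- apply/forallP=> z; apply/implyP; rewrite mem_rcons in_cons negb_or => /andP [zx zs].
  by rewrite ffunE (negbTE zx); have /implyP := g1 z; apply.
- apply/forallP=> z; apply/implyP; rewrite mem_rcons in_cons ffunE.
  case: eqP => [-> //|_ /= zs]; by have /implyP := g2 z; apply.
- apply/forallP=> y; apply/forallP=> z; apply/implyP.
  rewrite !mem_cat !mem_rcons !in_cons !ffunE.
  case: (y =P x) => [->|yx]; case: (z =P x) => [->|zx] /=.
  + by rewrite hirr.
  + move=> hz; have /implyP := hC z; rewrite mem_cat; apply; exact: hz.
  + rewrite andbT => hy; rewrite hsym; have /implyP := hC y; rewrite mem_cat; apply; exact: hy.
  + move=> hyz; have /forallP := g3 y; move/(_ z)/implyP; apply; by rewrite !mem_cat.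
Qed.

End Greedy.

Lemma take_index_filter (T : eqType) (p : pred T) (s : seq T) x : p x ->
  take (index x (filter p s)) (filter p s) = filter p (take (index x s) s).
Proof.
move=> px; elim: s => [|y s IH] //=.
case: (y =P x) => [->|yx]; first by rewrite px /= eqxx.
have nyx : (y == x) = false by apply/eqP.
case py: (p y) => /=; rewrite ?nyx /= ?py ?IH //.
Qed.

Lemma count_take_filter (T : eqType) (a p : pred T) (s K : seq T) x : p x ->
  count a (take (index x (filter p s)) (filter p s) ++ K) <=
  count a (take (index x s) s) + size K.
Proof.
move=> px; rewrite take_index_filter // count_cat count_filter.
apply: leq_add; last exact: count_size.
by apply: sub_count => z /andP [].
Qed.

Lemma size_filter2 (T : eqType) (s : seq T) u v : uniq s -> u \in s -> v \in s -> u != v ->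
  size [seq z <- s | z \notin [:: u; v]] = size s - 2.
Proof.
move=> us hu hv uv; rewrite size_filter.
have := count_predC (fun z => z \in [:: u; v]) s.
have -> : count (fun z => z \in [:: u; v]) s = 2.
  have := count_predUI (pred1 u) (pred1 v) s.
  rewrite (eq_count (a1 := predI _ _) (a2 := pred0)); last first.
    by move=> z /=; case: (z =P u) => // ->; rewrite (negbTE uv).
  rewrite count_pred0 addn0 !count_uniq_mem // hu hv.
  rewrite (eq_count (a1 := predU _ _) (a2 := fun z => z \in [:: u; v])) //.
  by move=> z; rewrite !inE.
move=> <-; rewrite addKn.
by apply: eq_count => z.
Qed.

Lemma size_filter1 (T : eqType) (s : seq T) u : uniq s -> u \in s ->
  size [seq z <- s | z \notin [:: u]] = size s - 1.
Proof.
move=> us hu; rewrite size_filter.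
have := count_predC (fun z => z \in [:: u]) s.
have -> : count (fun z => z \in [:: u]) s = 1.
  rewrite (eq_count (a2 := pred1 u)); last by move=> z; rewrite !inE.
  by rewrite count_uniq_mem // hu.
move=> <-; rewrite addKn.
by apply: eq_count => z.
Qed.

Lemma lonely_other (V : finType) (e : rel V) k (h : rel (V * 'I_k)) u v (x : 'I_k) :
  simple_graph e -> is_DP_cover e h -> e u v -> (forall b, ~~ h (u,x) (v,b)) ->
  exists y, forall a, ~~ h (v,y) (u,a).
Proof.
move=> [esym eirr] [hsym hirr h3 h4 h5] euv lx.
pose E := [set p : 'I_k * 'I_k | h (u,p.1) (v,p.2)].
have i1 : {in E &, injective (@fst 'I_k 'I_k)}.
  case=> a b [a' b']; rewrite !inE /= => H1 H2 eaa; subst a'.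
  have /card_le1_eqP Hc := h5 u v a euv.
  by congr (_, _); apply: Hc; rewrite inE.
have i2 : {in E &, injective (@snd 'I_k 'I_k)}.
  case=> a b [a' b']; rewrite !inE /= => H1 H2 ebb; subst b'.
  have evu : e v u by rewrite esym.
  have /card_le1_eqP Hc := h5 v u b evu.
  by congr (_, _); apply: Hc; rewrite inE hsym.
have c1 := card_in_imset i1; have c2 := card_in_imset i2.
have : #|(@fst 'I_k 'I_k) @: E| < #|[set: 'I_k]|.
  apply: proper_card; rewrite properT.
  apply/negP=> /eqP fT; have : x \in (@fst 'I_k 'I_k) @: E by rewrite fT inE.
  by case/imsetP=> [[a b]]; rewrite inE /= => hab exa; subst x; rewrite (negbTE (lx b)) in hab.
rewrite cardsT card_ord c1 -c2 => lt.
have [y ny] : exists y, y \notin (@snd 'I_k 'I_k) @: E.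
  apply/existsP; rewrite -negb_forall; apply/negP => /forallP Hall.
  have sT : (@snd 'I_k 'I_k) @: E = setT by apply/setP=> y; rewrite inE Hall.
  by move: lt; rewrite sT cardsT card_ord ltnn.
exists y => a; apply/negP => hya; move/negP: ny; apply; apply/imsetP; exists (a, y) => //.
by rewrite inE /= hsym.
Qed.

Lemma bonus (V : finType) (e : rel V) (k c pG : nat) (s0 : seq V) (h : rel (V * 'I_k)) u v (x : 'I_k) :
  simple_graph e -> perm_eq s0 (enum V) ->
  (forall z, z \in s0 -> count (e z) (take (index z s0) s0) < c) -> c.+1 <= k ->
  (forall h' : rel (V * 'I_k), is_DP_cover e h' -> pG <= DP_count h') ->
  is_DP_cover e h -> e u v -> (forall b, ~~ h (u,x) (v,b)) ->
  pG + (k - c - 1) ^ (#|V| - 2) <= #|[set f | proper h f]|.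
Proof.
move=> sg ps0 hs0 ck hpG cov euv lx.
have [y ly] := lonely_other sg cov euv lx.
case: sg => esym eirr; case: cov => hsym hirr h3 h4 h5.
have uv : u != v by apply/eqP=> euv'; subst v; rewrite eirr in euv.
pose h'' := fun p q : V * 'I_k => [|| h p q, (p == (u,x)) && (q == (v,y)) | (p == (v,y)) && (q == (u,x))].
have neq : (u,x) != (v,y) by rewrite xpair_eqE negb_and uv.
have cov'' : is_DP_cover e h''.
  split.
  - move=> p q; rewrite /h'' (hsym p q).
    by case: (p == (u,x)); case: (q == (u,x)); case: (p == (v,y)); case: (q == (v,y)).
  - move=> p; rewrite /h'' hirr /=.
    by case: (p =P (u,x)) => [->|]; [rewrite (negbTE neq) andbF | rewrite andbF].
  - by move=> w i j ij; rewrite /h'' h3.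
  - move=> w1 w2 a b w12; rewrite /h'' => /or3P [| /andP [/eqP [-> _] /eqP [-> _]] | /andP [/eqP [-> _] /eqP [-> _]]].
    + exact: h4.
    + exact: euv.
    + by rewrite esym.
  - move=> w1 w2 i ew; apply/card_le1_eqP => j j'; rewrite !inE.
    have key : forall j0, h'' (w1,i) (w2,j0) ->
      if ((w1,i) == (u,x)) && (w2 == v) then j0 == y
      else if ((w1,i) == (v,y)) && (w2 == u) then j0 == x
      else h (w1,i) (w2,j0).
      move=> j0; rewrite /h''; case/or3P => [H | /andP [/eqP E1 /eqP E2] | /andP [/eqP E1 /eqP E2]].
      - case: ifP => [/andP [/eqP [E1 E2] /eqP E3]|_].
          by subst; rewrite (negbTE (lx _)) in H.
        case: ifP => [/andP [/eqP [E1 E2] /eqP E3]|_] //.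
        by subst; rewrite (negbTE (ly _)) in H.
      - by case: E1 E2 => -> -> [-> ->]; rewrite !eqxx.
      - case: E1 E2 => -> -> [-> ->]; rewrite eq_sym (negbTE neq) /=.
        by rewrite !eqxx.
    move=> /key hj /key hj'.
    move: hj hj'; case: ifP => _; first by move=> /eqP -> /eqP ->.
    case: ifP => _; first by move=> /eqP -> /eqP ->.
    move=> Hj Hj'; have /card_le1_eqP := h5 w1 w2 i ew; apply; by rewrite inE.
have c'' := hpG h'' cov''.
rewrite (DPcount_fun (W:=V) (k:=k)) in c''; last by move=> w i j ij; rewrite /h'' h3.
pose T := [set f : {ffun V -> 'I_k} | [&& proper h f, f u == x & f v == y]].
set P'' := [set f | proper h'' f] in c''.
have sub1 : P'' :|: T \subset [set f | proper h f].
  apply/subsetP=> f; rewrite !inE => /orP [] ; last by case/and3P.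
  move=> /forallP pf; apply/forallP=> p; apply/forallP=> q.
  have /forallP /(_ q) := pf p; rewrite /h''; by rewrite negb_or => /andP [].
have disj : P'' :&: T = set0.
  apply/setP=> f; rewrite !inE; apply/negP=> /andP [/forallP pf /and3P [_ /eqP fu /eqP fv]].
  have /forallP /(_ v) := pf u; rewrite /h'' fu fv !eqxx /=.
  by rewrite orbT.
have cardT : (k - c - 1) ^ (#|V| - 2) <= #|T|.
  pose g0 : {ffun V -> 'I_k} := [ffun z => if z == u then x else y].
  have g0u : g0 u = x by rewrite ffunE eqxx.
  have g0v : g0 v = y by rewrite ffunE eq_sym (negbTE uv).
  have g0ok : forall x0 y0, x0 \in [:: u; v] -> y0 \in [:: u; v] -> ~~ h (x0, g0 x0) (y0, g0 y0).
    move=> x0 y0; rewrite !inE => /orP [] /eqP -> /orP [] /eqP ->; rewrite ?hirr ?g0u ?g0v //.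
  pose s := [seq z <- s0 | z \notin [:: u; v]].
  have us0 : uniq s0 by rewrite (perm_uniq ps0) enum_uniq.
  have ins0 z : z \in s0 by rewrite (perm_mem ps0) mem_enum.
  have sz : size s = #|V| - 2.
    by rewrite size_filter2 // (perm_size ps0) cardE.
  have G := greedy esym hsym hirr h4 h5 (A := fun _ => setT) g0ok (t := k - c - 1) (s := s).
  rewrite sz in G.
  apply: (leq_trans (G _ _ _)).
  - exact: filter_uniq.
  - by move=> z; rewrite mem_filter => /andP [].
  - move=> z zs; rewrite cardsT card_ord.
    have pz : z \notin [:: u; v] by move: zs; rewrite mem_filter => /andP [].
    have := count_take_filter (e z) (p := fun z => z \notin [:: u; v]) s0 [:: u; v] pz.
    have := hs0 z (ins0 z); rewrite /s /=; lia.
  - apply: subset_leq_card; apply/subsetP=> g; rewrite !inE.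
    case/and3P=> /forallP g1 _ /forallP g3.
    have gu : g u = x.
      by have /implyP := g1 u; rewrite mem_filter !inE eqxx /= => /(_ isT) /eqP ->.
    have gv : g v = y.
      by have /implyP := g1 v; rewrite mem_filter !inE eqxx orbT /= => /(_ isT) /eqP ->.
    rewrite gu gv !eqxx !andbT; apply/forallP=> p; apply/forallP=> q.
    have /forallP /(_ q) /implyP := g3 p; apply.
    have inall z : z \in s ++ [:: u; v].
      rewrite mem_cat mem_filter ins0 andbT; by case: (z \in [:: u; v]).
    by rewrite !inall.
move: (subset_leq_card sub1); rewrite cardsU disj cards0 subn0.
lia.
Qed.

Lemma expn_mono a b n : a <= b -> a ^ n <= b ^ n.
Proof. by move=> ab; elim: n => [|n IH] //; rewrite !expnS leq_mul. Qed.

Lemma sum_bound1 m (F : 'I_m -> nat) b i :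
  (forall l, b <= F l) -> m * b + (F i - b) <= \sum_l F l.
Proof.
move=> hb.
have -> : \sum_l F l = \sum_l (b + (F l - b)) by apply: eq_bigr => l _; rewrite subnKC.
rewrite big_split /= sum_nat_const card_ord leq_add2l.
by rewrite (bigD1 i) //= leq_addr.
Qed.

Lemma sum_bound2 m (F : 'I_m -> nat) b i j : i != j ->
  (forall l, b <= F l) -> m * b + (F i - b) + (F j - b) <= \sum_l F l.
Proof.
move=> ij hb.
have -> : \sum_l F l = \sum_l (b + (F l - b)) by apply: eq_bigr => l _; rewrite subnKC.
rewrite big_split /= sum_nat_const card_ord -addnA leq_add2l.
rewrite (bigD1 i) //= leq_add2l (bigD1 j) /=; last by rewrite eq_sym.
exact: leq_addr.
Qed.

Section Join.
Variables (V : finType) (e : rel V) (m : nat) (H : rel (option V * 'I_m)).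
Hypothesis cov : is_DP_cover (join_K1 e) H.

Definition hG : rel (V * 'I_m) := fun p q => H (Some p.1, p.2) (Some q.1, q.2).
Definition Sset (i : 'I_m) := [set g : {ffun V -> 'I_m} |
   proper hG g && [forall u, ~~ H (None, i) (Some u, g u)]].

Lemma join_decomp : \sum_i #|Sset i| <= #|[set f : {ffun option V -> 'I_m} | proper H f]|.
Proof.
case: cov => hsym hirr _ _ _.
rewrite -sum1_card (partition_big (fun f : {ffun option V -> 'I_m} => f None) predT) //=.
apply: leq_sum => i _.
pose ext (g : {ffun V -> 'I_m}) : {ffun option V -> 'I_m} :=
  [ffun x => if x is Some u then g u else i].
have einj : injective ext.
  move=> g1 g2 eq; apply/ffunP=> u.
  by have := congr1 (fun f : {ffun option V -> 'I_m} => f (Some u)) eq; rewrite !ffunE.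
rewrite -(card_imset _ einj).
rewrite [X in _ <= X](eq_bigl (fun f => f \in [set f | proper H f & f None == i])); last first.
  by move=> f; rewrite !inE.
rewrite sum1_card; apply: subset_leq_card; apply/subsetP=> f /imsetP [g].
rewrite !inE => /andP [/forallP pg /forallP av] ->; rewrite ffunE eqxx andbT.
apply/forallP=> [[x|]]; apply/forallP=> [[y|]]; rewrite !ffunE.
- by have /forallP := pg x; apply.
- by rewrite hsym; apply: av.
- exact: av.
- by rewrite hirr.
Qed.

End Join.

Section Level.
Variables (V : finType) (e : rel V) (k : nat) (H : rel (option V * 'I_k.+1)).
Hypotheses (sg : simple_graph e) (cov : is_DP_cover (join_K1 e) H).

Lemma hG_sym : symmetric (hG H).
Proof. by case: cov => hsym _ _ _ _ p q; rewrite /hG hsym. Qed.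
Lemma hG_irr : irreflexive (hG H).
Proof. by case: cov => _ hirr _ _ _ p; rewrite /hG hirr. Qed.
Lemma hG_same u (i j : 'I_k.+1) : i != j -> hG H (u,i) (u,j).
Proof. by case: cov => _ _ h3 _ _ ij; rewrite /hG h3. Qed.
Lemma hG_cross u v a b : u != v -> hG H (u,a) (v,b) -> e u v.
Proof.
case: cov => _ _ _ h4 _ uv; rewrite /hG /= => /h4; apply.
by apply/eqP=> [[]]; apply/eqP.
Qed.
Lemma hG_match u v a : e u v -> #|[set b | hG H (u,a) (v,b)]| <= 1.
Proof.
case: cov => _ _ _ _ h5 euv; have := h5 (Some u) (Some v) a euv.
by congr (_ <= _); apply: eq_card => b; rewrite !inE.
Qed.

Lemma H_match_None i u a b : H (None, i) (Some u, a) -> H (None, i) (Some u, b) -> a = b.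
Proof.
case: cov => _ _ _ _ h5 ha hb.
have /card_le1_eqP := h5 None (Some u) i isT; apply; by rewrite inE.
Qed.

Lemma H_match_Some i j u a : H (None, i) (Some u, a) -> H (None, j) (Some u, a) -> i = j.
Proof.
case: cov => hsym _ _ _ h5 ha hb.
have /card_le1_eqP := h5 (Some u) None a isT; apply; by rewrite inE hsym.
Qed.

Definition psi (i : 'I_k.+1) (u : V) : 'I_k.+1 :=
  odflt ord0 [pick j | H (None, i) (Some u, j)].

Lemma psi_eq i u a : H (None, i) (Some u, a) -> a = psi i u.
Proof.
rewrite /psi; case: pickP => [j Hj|none] ha /=; first exact: H_match_None ha Hj.
by have := none a; rewrite ha.
Qed.

Definition hl (i : 'I_k.+1) : rel (V * 'I_k) :=
  fun p q => hG H (p.1, lift (psi i p.1) p.2) (q.1, lift (psi i q.1) q.2).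

Lemma hl_cover i : is_DP_cover e (hl i).
Proof.
split.
- by move=> p q; rewrite /hl hG_sym.
- by move=> p; rewrite /hl hG_irr.
- by move=> u a b ab; rewrite /hl hG_same // (inj_eq lift_inj).
- by move=> u v a b uv; rewrite /hl => /hG_cross; apply.
- move=> u v a euv; apply: leq_trans (hG_match (lift (psi i u) a) euv).
  rewrite -(card_imset [set b | hl i (u,a) (v,b)] (@lift_inj _ (psi i v))); apply: subset_leq_card; apply/subsetP=> b.
  by case/imsetP=> b' ; rewrite !inE => hb ->.
Qed.

Definition Sset1 i := [set g : {ffun V -> 'I_k.+1} |
   proper (hG H) g && [forall u, g u != psi i u]].

Lemma Sset1_sub i : Sset1 i \subset Sset H i.
Proof.
apply/subsetP=> g; rewrite !inE => /andP [-> /forallP hg] /=.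
apply/forallP=> u; apply/negP=> /psi_eq eq; by have := hg u; rewrite eq eqxx.
Qed.

Lemma hl_le_S1 i : #|[set g | proper (hl i) g]| <= #|Sset1 i|.
Proof.
pose F (g : {ffun V -> 'I_k}) : {ffun V -> 'I_k.+1} := [ffun u => lift (psi i u) (g u)].
have Finj : injective F.
  move=> g1 g2 eq; apply/ffunP=> u.
  have := congr1 (fun f : {ffun V -> 'I_k.+1} => f u) eq; rewrite !ffunE.
  exact: lift_inj.
rewrite -(card_imset _ Finj); apply: subset_leq_card; apply/subsetP=> f.
case/imsetP=> g; rewrite !inE => /forallP pg ->.
apply/andP; split.
  apply/forallP=> x; apply/forallP=> y; rewrite !ffunE.
  by have /forallP := pg x; apply.
by apply/forallP=> u; rewrite ffunE eq_sym neq_lift.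
Qed.

Lemma S_ge_pG i pG :
  (forall h' : rel (V * 'I_k), is_DP_cover e h' -> pG <= DP_count h') ->
  pG <= #|Sset H i|.
Proof.
move=> hpG; have := hpG _ (hl_cover i).
rewrite (DPcount_fun (W:=V)); last by case: (hl_cover i).
move=> h1; apply: (leq_trans h1); apply: (leq_trans (hl_le_S1 i)).
exact: subset_leq_card (Sset1_sub i).
Qed.

End Level.

Section Level2.
Variables (V : finType) (e : rel V) (k : nat) (H : rel (option V * 'I_k.+1)).
Hypotheses (sg : simple_graph e) (cov : is_DP_cover (join_K1 e) H).

Lemma caseA (s0 : seq V) c pG i u :
  perm_eq s0 (enum V) -> (forall z, z \in s0 -> count (e z) (take (index z s0) s0) < c) ->
  c <= k ->
  (forall h' : rel (V * 'I_k), is_DP_cover e h' -> pG <= DP_count h') ->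
  (forall j, ~~ H (None, i) (Some u, j)) ->
  pG + (k - c) ^ (#|V| - 1) <= #|Sset H i|.
Proof.
move=> ps0 hs0 ck hpG lone.
have esym : symmetric e by case: sg.
pose set2 := [set g : {ffun V -> 'I_k.+1} | [&& proper (hG H) g,
   [forall z, ~~ H (None, i) (Some z, g z)] & g u == psi H i u]].
have sub : Sset1 H i :|: set2 \subset Sset H i.
  rewrite subUset (Sset1_sub cov) /=; apply/subsetP=> g; rewrite !inE.
  by case/and3P=> -> -> _.
have disj : Sset1 H i :&: set2 = set0.
  apply/setP=> g; rewrite !inE; apply/negP=> /andP [/andP [_ /forallP hg] /and3P [_ _ /eqP gu]].
  by have := hg u; rewrite gu eqxx.
have c1 : pG <= #|Sset1 H i|.
  have := hpG _ (hl_cover cov i).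
  rewrite (DPcount_fun (W:=V)); last by case: (hl_cover cov i).
  move=> h1; exact: (leq_trans h1 (hl_le_S1 H i)).
have c2 : (k - c) ^ (#|V| - 1) <= #|set2|.
  pose g0 : {ffun V -> 'I_k.+1} := [ffun _ => psi H i u].
  have g0ok : forall x0 y0, x0 \in [:: u] -> y0 \in [:: u] -> ~~ hG H (x0, g0 x0) (y0, g0 y0).
    by move=> x0 y0; rewrite !inE => /eqP -> /eqP ->; rewrite (hG_irr cov).
  pose A z := [set a | ~~ H (None, i) (Some z, a)].
  pose s := [seq z <- s0 | z \notin [:: u]].
  have us0 : uniq s0 by rewrite (perm_uniq ps0) enum_uniq.
  have ins0 z : z \in s0 by rewrite (perm_mem ps0) mem_enum.
  have sz : size s = #|V| - 1.
    by rewrite size_filter1 // (perm_size ps0) cardE.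
  have G := greedy esym (hG_sym cov) (hG_irr cov) (hG_cross cov) (hG_match cov) (A := A) g0ok (t := k - c) (s := s).
  rewrite sz in G.
  apply: (leq_trans (G _ _ _)).
  - exact: filter_uniq.
  - by move=> z; rewrite mem_filter => /andP [].
  - move=> z zs.
    have pz : z \notin [:: u] by move: zs; rewrite mem_filter => /andP [].
    have hA : k <= #|A z|.
      have : [set: 'I_k.+1] \subset A z :|: [set a | H (None, i) (Some z, a)].
        by apply/subsetP=> a _; rewrite !inE; case: (H _ _).
      move/subset_leq_card; rewrite cardsT card_ord cardsU => h1.
      have h2 : #|[set a | H (None, i) (Some z, a)]| <= 1.
        by case: cov => _ _ _ _ h5; exact: (h5 None (Some z) i isT).
      move: h1 h2; set x1 := #|A z|; set x2 := #|[set a | _]|; set x3 := #|_ :&: _|; lia.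
    have := count_take_filter (e z) (p := fun z => z \notin [:: u]) s0 [:: u] pz.
    have := hs0 z (ins0 z); move: hA; rewrite /s /A /=; set cA := #|_|; lia.
  - apply: subset_leq_card; apply/subsetP=> g; rewrite !inE.
    case/and3P=> /forallP g1 /forallP g2 /forallP g3.
    have gu : g u = psi H i u.
      by have /implyP := g1 u; rewrite mem_filter !inE eqxx /= => /(_ isT) /eqP ->; rewrite ffunE.
    have inall z : z \in s ++ [:: u].
      rewrite mem_cat mem_filter ins0 andbT; by case: (z \in [:: u]).
    rewrite gu eqxx andbT; apply/andP; split.
      apply/forallP=> p; apply/forallP=> q.
      by have /forallP /(_ q) /implyP := g3 p; apply; rewrite !inall.
    apply/forallP=> z; case: (z =P u) => [->|zu]; first by rewrite gu.
    have /implyP := g2 z; rewrite mem_filter !inE ins0 andbT; move/eqP: zu => -> /(_ isT).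
    by [].
move: (subset_leq_card sub); rewrite cardsU disj cards0 subn0.
lia.
Qed.

End Level2.

Section Level3.
Variables (V : finType) (e : rel V) (k : nat) (H : rel (option V * 'I_k.+1)).
Hypotheses (sg : simple_graph e) (cov : is_DP_cover (join_K1 e) H).
Hypothesis tot : forall i u, exists j, H (None, i) (Some u, j).

Definition perfect i := [forall u, forall v, e u v ==>
   [forall a, [exists b, hl H i (u,a) (v,b)]]].

Lemma pi_H i u : H (None, i) (Some u, psi H i u).
Proof. by have [j hj] := tot i u; rewrite -(psi_eq cov hj). Qed.

Lemma pi_inj u : injective (fun i => psi H i u).
Proof.
move=> i j /= eq; apply: (H_match_Some cov (u:=u) (a:=psi H i u)); first exact: pi_H.
by rewrite eq; exact: pi_H.
Qed.

Lemma pi_surj u b : exists y, b = psi H y u.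
Proof.
have := inj_card_onto (pi_inj (u:=u)) (leqnn _) b.
by case/codomP=> y ->; exists y.
Qed.

Lemma H_match_uv u v a b b' : e u v -> H (Some u, a) (Some v, b) -> H (Some u, a) (Some v, b') -> b = b'.
Proof.
case: cov => _ _ _ _ h5 euv hb hb'.
have /card_le1_eqP := h5 (Some u) (Some v) a euv; apply; by rewrite inE.
Qed.

Lemma perfect' i u v a : perfect i -> e u v -> a != psi H i u ->
  exists2 b, b != psi H i v & H (Some u, a) (Some v, b).
Proof.
move=> /forallP /(_ u) /forallP /(_ v) /implyP pf euv.
case: (unliftP (psi H i u) a) => [a' ->|->]; last by rewrite eqxx.
move=> _; have /forallP /(_ a') /existsP [b' hb'] := pf euv.
by exists (lift (psi H i v) b'); [rewrite eq_sym neq_lift | exact: hb'].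
Qed.

Lemma D_holds (k2 : 2 <= k) (per : forall i j, i != j -> perfect i || perfect j) u v l :
  e u v -> H (Some u, psi H l u) (Some v, psi H l v).
Proof.
move=> euv.
have esym : symmetric e by case: sg.
have hsym : symmetric H by case: cov.
have [kk [kkl pkk]] : exists kk, kk != l /\ perfect kk.
  have : 1 < #|predC1 l| by rewrite cardC1 card_ord.
  case/card_gt1P=> k1 [k2' [h1 h2 k12]].
  by case/orP: (per k1 k2' k12) => p; [exists k1 | exists k2'].
have neq1 : psi H l u != psi H kk u.
  by apply/negP=> /eqP /pi_inj /eqP; rewrite eq_sym (negbTE kkl).
have [b bk hb] := perfect' pkk euv neq1.
case: (pi_surj v b) => y ey; subst b.
case: (y =P l) => [eyl|yl]; first by subst y.
have : y != l by apply/eqP.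
move=> /per /orP [py | pl].
- have neq2 : psi H l u != psi H y u by apply/negP=> /eqP /pi_inj ly; apply: yl.
  have [b2 b2y hb2] := perfect' py euv neq2.
  by have := H_match_uv euv hb hb2 => eb; rewrite eb eqxx in b2y.
- have evu : e v u by rewrite esym.
  have neq3 : psi H y v != psi H l v by apply/negP=> /eqP /pi_inj.
  have [a2 a2l ha2] := perfect' pl evu neq3.
  have hb' : H (Some v, psi H y v) (Some u, psi H l u) by rewrite hsym.
  by have := H_match_uv evu hb' ha2 => ea; rewrite ea eqxx in a2l.
Qed.

Lemma chrom_le (k2 : 2 <= k) (per : forall i j, i != j -> perfect i || perfect j) :
  chrom_poly (join_K1 e) k.+1 <= #|[set f | proper H f]|.
Proof.
have hsym : symmetric H by case: cov.
have hirr : irreflexive H by case: cov.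
pose F (f : {ffun option V -> 'I_k.+1}) : {ffun option V -> 'I_k.+1} :=
  [ffun x => if x is Some u then psi H (f (Some u)) u else f None].
have Finj : injective F.
  move=> f1 f2 eq; apply/ffunP=> [[u|]].
    have := congr1 (fun f : {ffun option V -> 'I_k.+1} => f (Some u)) eq; rewrite !ffunE.
    exact: pi_inj.
  by have := congr1 (fun f : {ffun option V -> 'I_k.+1} => f None) eq; rewrite !ffunE.
rewrite /chrom_poly -(card_imset _ Finj); apply: subset_leq_card; apply/subsetP=> g.
case/imsetP=> f; rewrite !inE => /forallP pf ->.
have pf2 x y : join_K1 e x y -> f x != f y.
  by move=> hxy; have /forallP /(_ y) /implyP := pf x; apply.
apply/forallP=> [[x|]]; apply/forallP=> [[y|]]; rewrite !ffunE.
- case: (x =P y) => [->|xy]; first by rewrite hirr.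
  apply/negP=> hxy.
  have exy : e x y.
    case: cov => _ _ _ h4 _; apply: (h4 (Some x) (Some y) _ _ _ hxy).
    by apply/eqP => -[eq]; exact: xy eq.
  have hD := D_holds k2 per (f (Some x)) exy.
  have := H_match_uv exy hxy hD => /pi_inj eqf.
  by have := pf2 (Some x) (Some y) exy; rewrite eqf eqxx.
- apply/negP=> hx.
  have : H (None, f None) (Some x, psi H (f (Some x)) x) by rewrite hsym.
  move=> hn; have := H_match_Some cov hn (pi_H (f (Some x)) x) => eqf.
  by have := pf2 None (Some x) isT; rewrite eqf eqxx.
- apply/negP=> hn; have := H_match_Some cov hn (pi_H (f (Some y)) y) => eqf.
  by have := pf2 None (Some y) isT; rewrite eqf eqxx.
- by rewrite hirr.
Qed.

End Level3.

Lemma nonperfect_bonus (V : finType) (e : rel V) (k c pG : nat) (s0 : seq V)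
   (H : rel (option V * 'I_k.+1)) i :
  simple_graph e -> is_DP_cover (join_K1 e) H -> perm_eq s0 (enum V) ->
  (forall z, z \in s0 -> count (e z) (take (index z s0) s0) < c) -> c.+1 <= k ->
  (forall h' : rel (V * 'I_k), is_DP_cover e h' -> pG <= DP_count h') ->
  ~~ perfect e H i -> pG + (k - c - 1) ^ (#|V| - 2) <= #|Sset H i|.
Proof.
move=> sg cov ps0 hs0 ck hpG /forallPn [u /forallPn [v]].
rewrite negb_imply => /andP [euv /forallPn [a]]; rewrite negb_exists => /forallP lone.
have := bonus sg ps0 hs0 ck hpG (hl_cover cov i) euv lone.
move=> h1; apply: (leq_trans h1); apply: (leq_trans (hl_le_S1 H i)).
exact: subset_leq_card (Sset1_sub cov i).
Qed.

Unset Implicit Arguments.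

Theorem mainTheorem6 (V : finType) (e : rel V) (c m pJ pG : nat) :
  simple_graph e -> connected_graph e ->
  is_coloring_number e c -> 3 <= c ->
  c + 3 <= m ->
  is_DP_poly (join_K1 e) m pJ ->
  is_DP_poly e (m - 1) pG ->
  minn (chrom_poly (join_K1 e) m)
       (m * pG + 2 * (m - c - 2) ^ (#|V| - 2)) <= pJ.
Proof.
move=> sg _ [[s0 [ps0 hs0]] cmin] c3 cm [[H0 [cov0 eq0]] _] [_ hpG].
have [k ek] : exists k, m = k.+1 by exists m.-1; lia.
subst m; rewrite subSS subn0 in hpG.
have nV : c <= #|V|.
  apply: cmin; exists (enum V); split => // x xe.
  apply: (leq_ltn_trans (count_size _ _)).
  by rewrite size_takel ?index_size // cardE index_mem.
have -> : k.+1 - c - 2 = k - c - 1 by lia.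
set B := (k - c - 1) ^ (#|V| - 2).
have hk : c.+1 <= k by lia.
have pJe : pJ = #|[set f | proper H0 f]|.
  by rewrite -eq0 (DPcount_fun (W:=option V)) //; case: cov0.
rewrite pJe.
have sumS := join_decomp cov0.
have Sge i : pG <= #|Sset H0 i| := S_ge_pG cov0 i hpG.
case: (boolP [exists i, exists u, [forall j, ~~ H0 (None, i) (Some u, j)]]).
  case/existsP=> i /existsP [u /forallP lone].
  have hA := caseA sg cov0 ps0 hs0 (ltnW hk) hpG lone.
  have h2B : 2 * B <= (k - c) ^ (#|V| - 1).
    have -> : #|V| - 1 = (#|V| - 2).+1 by lia.
    rewrite expnS /B; apply: leq_mul; first by lia.
    apply: expn_mono; lia.
  apply: leq_trans (geq_minr _ _) _.
  apply: leq_trans (sumS).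
  apply: leq_trans (sum_bound1 i Sge).
  lia.
move=> /existsPn ntot.
have tot : forall i u, exists j, H0 (None, i) (Some u, j).
  move=> i u; have /existsPn /(_ u) /forallPn [j] := ntot i.
  by rewrite negbK => hj; exists j.
case: (boolP [exists i, exists j, [&& i != j, ~~ perfect e H0 i & ~~ perfect e H0 j]]).
  case/existsP=> i /existsP [j /and3P [ij pi pj]].
  have bi := nonperfect_bonus sg cov0 ps0 hs0 hk hpG pi.
  have bj := nonperfect_bonus sg cov0 ps0 hs0 hk hpG pj.
  apply: leq_trans (geq_minr _ _) _.
  apply: leq_trans (sumS).
  apply: leq_trans (sum_bound2 ij Sge).
  move: bi bj; rewrite -/B; lia.
move=> /existsPn per.
have per' : forall i j, i != j -> perfect e H0 i || perfect e H0 j.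
  move=> i j ij; have /existsPn /(_ j) := per i.
  by rewrite ij /= negb_and !negbK.
apply: leq_trans (geq_minl _ _) _.
apply: chrom_le => //; lia.
Qed.
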